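(* Let $\mathcal{A}$ be an abelian group. Let $M_{12}(p_1,p_2)$ be the graph with vertices $v_1,\dots,v_5$ and edges $v_1v_2$, $v_2v_3$, $v_2v_4$, $v_2v_5$, $v_3v_4$, $v_4v_5$, together with $p_1\ge 1$ pendant vertices adjacent to $v_1$ and $p_2\ge0$ pendant vertices adjacent to $v_2$. Then $M_{12}(p_1,p_2)$ is $\mathcal{A}$-vertex magic if and only if $p_2=0$, $\mathcal{A}$ contains an involution $h$, and there exist $g_1,g_2\in\mathcal{A}\setminus\{0\}$ with $g_1+g_2=h$.
   Context: An involution is an element of order $2$. A map $\ell:V(G)\to\mathcal{A}\setminus\{0\}$ is an $\mathcal{A}$-vertex magic labeling if there is $\mu\in\mathcal{A}$ with $\sum_{u\in N(v)}\ell(u)=\mu$ for every vertex $v$; $G$ is $\mathcal{A}$-vertex magic if such a labeling exists. A pendant vertex has degree $1$. *)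

(* Defs.v *)
From HB Require Import structures.
From mathcomp Require Import all_boot all_order all_algebra.
Set Implicit Arguments. Unset Strict Implicit. Unset Printing Implicit Defensive.
Import GRing.Theory.
Local Open Scope ring_scope.

Definition vertex_magic_labeling (V : finType) (adj : rel V) (A : zmodType)
  (l : V -> A) : Prop :=
  (forall v, l v != 0) /\ exists mu : A, forall v, \sum_(u | adj v u) l u = mu.

Definition vertex_magic (V : finType) (adj : rel V) (A : zmodType) : Prop :=
  exists l : V -> A, vertex_magic_labeling adj l.

Definition involution (A : zmodType) (h : A) : Prop := h != 0 /\ h + h = 0.

(* Vertices of M12(p1,p2): inl i is v_{i+1} (i < 5);
   inr (inl k) : pendants at v1;  inr (inr k) : pendants at v2. *)
Definition M12_vert (p1 p2 : nat) : finType := ('I_5 + ('I_p1 + 'I_p2))%type.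

Definition M12_core (i j : 'I_5) : bool :=
  ((val i, val j) \in
     [:: (0,1); (1,2); (1,3); (1,4); (2,3); (3,4)]%N).

Definition M12_adj (p1 p2 : nat) : rel (M12_vert p1 p2) :=
  fun x y =>
    match x, y with
    | inl i, inl j => M12_core i j || M12_core j i
    | inl i, inr (inl _) => val i == 0%N
    | inr (inl _), inl i => val i == 0%N
    | inl i, inr (inr _) => val i == 1%N
    | inr (inr _), inl i => val i == 1%N
    | _, _ => false
    end.

(* Main.v *)
Require Import Defs.
From HB Require Import structures.
From mathcomp Require Import all_boot all_order all_algebra.
Set Implicit Arguments.
Local Open Scope ring_scope.
Import GRing.Theory.

Section S.
Variables (A : zmodType) (p1 p2 : nat) (l : M12_vert p1 p2 -> A).
Definition vv {i : nat} (H : (i < 5)%N) : M12_vert p1 p2 := inl (Ordinal H).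
Local Notation V i := (vv (isT : (i < 5)%N)).

Lemma sum_v (i : nat) (H : (i < 5)%N) :
  \sum_(u | M12_adj (vv H) u) l u =
  \sum_(j < 5 | M12_core (Ordinal H) j || M12_core j (Ordinal H)) l (inl j)
  + ((if i == 0%N then \sum_(k < p1) l (inr (inl k)) else 0)
  + (if i == 1%N then \sum_(k < p2) l (inr (inr k)) else 0)).
Proof.
rewrite big_sumType /= big_sumType /=.
by case: (i == 0%N) => /=; case: (i == 1%N) => /=; rewrite ?big_pred0_eq.
Qed.

Ltac fin := rewrite ?addr0 ?add0r; do ?congr (_ + _); do ?congr (l (inl _)); apply: val_inj.

Lemma sum_p1 k : \sum_(u | M12_adj (inr (inl k)) u) l u = l (V 0).
Proof.
rewrite big_sumType /= big_sumType /= !big_pred0_eq !addr0.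
rewrite big_mkcond /= !big_ord_recl big_ord0 /=.
by fin.
Qed.

Lemma sum_p2 k : \sum_(u | M12_adj (inr (inr k)) u) l u = l (V 1).
Proof.
rewrite big_sumType /= big_sumType /= !big_pred0_eq !addr0.
rewrite big_mkcond /= !big_ord_recl big_ord0 /=.
by fin.
Qed.

Lemma sum_0 (H : (0 < 5)%N) : \sum_(u | M12_adj (vv H) u) l u = l (V 1) + \sum_(k < p1) l (inr (inl k)).
Proof. rewrite sum_v /= addr0 big_mkcond /= !big_ord_recl big_ord0 /=. by fin. Qed.

Lemma sum_1 (H : (1 < 5)%N) : \sum_(u | M12_adj (vv H) u) l u =
   l (V 0) + (l (V 2) + (l (V 3) + l (V 4))) + \sum_(k < p2) l (inr (inr k)).
Proof. rewrite sum_v /= add0r big_mkcond /= !big_ord_recl big_ord0 /=. by fin. Qed.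

Lemma sum_2 (H : (2 < 5)%N) : \sum_(u | M12_adj (vv H) u) l u = l (V 1) + l (V 3).
Proof. rewrite sum_v /= !addr0 big_mkcond /= !big_ord_recl big_ord0 /=. by fin. Qed.

Lemma sum_3 (H : (3 < 5)%N) : \sum_(u | M12_adj (vv H) u) l u = l (V 1) + (l (V 2) + l (V 4)).
Proof. rewrite sum_v /= !addr0 big_mkcond /= !big_ord_recl big_ord0 /=. by fin. Qed.

Lemma sum_4 (H : (4 < 5)%N) : \sum_(u | M12_adj (vv H) u) l u = l (V 1) + l (V 3).
Proof. rewrite sum_v /= !addr0 big_mkcond /= !big_ord_recl big_ord0 /=. by fin. Qed.
End S.

Lemma mulh (A : zmodType) (h : A) m : h + h = 0 -> h *+ m = if odd m then h else 0.
Proof.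
move=> hh; elim: m => [|m IH]; first by rewrite mulr0n.
by rewrite mulrS IH /=; case: (odd m) => /=; rewrite ?addr0.
Qed.

Definition pa (A : zmodType) (h g1 g2 : A) (p : nat) (k : 'I_p) : A :=
  if odd p then h else if val k == 0%N then g1 else if val k == 1%N then g2 else h.
Arguments pa {A} h g1 g2 {p} k.

Lemma pend_sum (A : zmodType) (h g1 g2 : A) p : (0 < p)%N -> h + h = 0 -> g1 + g2 = h ->
  \sum_(k < p) pa h g1 g2 k = h.
Proof.
case: p => [|[|n]] // _ hh hg.
  by rewrite big_ord_recl big_ord0 /pa /= addr0.
rewrite /pa /=; case od: (odd n).
  by rewrite sumr_const card_ord mulh //= od.
rewrite !big_ord_recl /=.
rewrite (eq_bigr (fun _ => h)); last by [].
by rewrite sumr_const card_ord mulh // od addr0.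
Qed.

Theorem proposition4p10 (A : zmodType) (p1 p2 : nat) (hp1 : (1 <= p1)%N) :
  vertex_magic (@M12_adj p1 p2) A <->
  (p2 = 0%N /\
   exists h : A, involution h /\
     exists g1 g2 : A, g1 != 0 /\ g2 != 0 /\ g1 + g2 = h).
Proof.
split.
- move=> [l [Hnz [mu Hmu]]].
  have e0 := Hmu (inr (inl (Ordinal hp1))); rewrite sum_p1 in e0.
  have e1 := Hmu (vv p1 p2 (isT : (1 < 5)%N)); rewrite sum_1 in e1.
  have e2 := Hmu (vv p1 p2 (isT : (2 < 5)%N)); rewrite sum_2 in e2.
  have e3 := Hmu (vv p1 p2 (isT : (3 < 5)%N)); rewrite sum_3 in e3.
  case: p2 l Hnz Hmu e0 e1 e2 e3 => [|n] l Hnz Hmu e0 e1 e2 e3; last first.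
    have e := Hmu (inr (inr ord0)); rewrite sum_p2 in e.
    have : l (vv p1 n.+1 (isT : (3 < 5)%N)) = 0.
      by apply: (@addrI _ (l (vv p1 n.+1 (isT : (1 < 5)%N)))); rewrite addr0 e2 e.
    by move/eqP; rewrite (negbTE (Hnz _)).
  rewrite big_ord0 addr0 e0 in e1.
  split => //.
  set l1 := l (vv _ _ (isT : (1 < 5)%N)) in e2 e3.
  set l2 := l (vv _ _ (isT : (2 < 5)%N)) in e1 e3.
  set l3 := l (vv _ _ (isT : (3 < 5)%N)) in e1 e2.
  set l4 := l (vv _ _ (isT : (4 < 5)%N)) in e1 e3.
  have h24 : l2 + l4 = l3 by apply: (@addrI _ l1); rewrite e3 e2.
  have e1' : l2 + (l3 + l4) = 0 by apply: (@addrI _ mu); rewrite addr0.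
  exists l3; split; first split; first exact: Hnz.
    by rewrite -{1}h24 -e1' -addrA (addrC l4).
  by exists l2, l4; split; [exact: Hnz | split; [exact: Hnz | ]].
- move=> [-> [h [[hnz hh] [g1 [g2 [n1 [n2 hg]]]]]]].
  pose l : M12_vert p1 0 -> A := fun x => match x with
    | inl i => nth 0 [:: g1; -g2; g1; h; g2] i
    | inr (inl k) => pa h g1 g2 k
    | inr (inr _) => h end.
  exists l; split.
    case => [[[|[|[|[|[|?]]]]] Hi]|[k|[]]] //=; rewrite ?oppr_eq0 //.
    by rewrite /pa; repeat case: ifP.
  exists g1.
  case => [[[|[|[|[|[|?]]]]] Hi]|[k|[]]] //.
  + rewrite (@sum_0 _ _ _ l Hi) /=.
    rewrite (eq_bigr (fun k => pa h g1 g2 k)) // pend_sum //.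
    by rewrite -hg addrC addrK.
  + rewrite (@sum_1 _ _ _ l Hi) /= big_ord0 addr0.
    by rewrite [g1 + (h + g2)]addrCA hg hh !addr0.
  + by rewrite (@sum_2 _ _ _ l Hi) /= -hg addrC addrK.
  + by rewrite (@sum_3 _ _ _ l Hi) /= addrCA addNr addr0.
  + by rewrite (@sum_4 _ _ _ l Hi) /= -hg addrC addrK.
  + by rewrite sum_p1.
Qed.
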